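(* Let $d\ge 3$ and let $G_d$ be the group defined in the context. Then the element $a_1a_2\cdots a_d$ has infinite order in $G_d$.
   Context: Let $d\ge 3$, $X=\{1,\dots,d\}$, $X^*$ the free monoid on $X$, and $T$ the $d$-regular rooted tree with vertex set $X^*$ (root the empty word, $u$ adjacent to $ux$ for $x\in X$). $\mathrm{Aut}(T)$ is the group of root-preserving tree automorphisms, with product written left-to-right: $(gh)(u)=h(g(u))$. For $g\in\mathrm{Aut}(T)$ and $u\in X^*$ the section $g|_u\in\mathrm{Aut}(T)$ is defined by $g(uv)=g(u)\,g|_u(v)$. We write $g=(g|_1,\dots,g|_d)\lambda_g$, where $\lambda_g\in S_d$ is the permutation induced by $g$ on $X$ (so $g(xw)=\lambda_g(x)\,g|_x(w)$), and $e$ is the identity. For $j\in\mathbb{N}$, $\overline{j}\in\{1,\dots,d\}$ denotes the residue with $\overline j\equiv j \pmod d$. The group $G_d\le \mathrm{Aut}(T)$ is generated by $A=\{a_1,\dots,a_d\}$, where for each $i$, $a_i$ acts on the first level as the transposition $(i\ \overline{i+1})$, has sections $a_i|_i=a_i$, $a_i|_{\overline{i+1}}=a_{\overline{i+1}}$, and $a_i|_x=e$ for all other $x\in X$. Explicitly $a_1=(a_1,a_2,e,\dots,e)(1\,2)$, $a_2=(e,a_2,a_3,e,\dots,e)(2\,3)$, …, $a_{d-1}=(e,\dots,e,a_{d-1},a_d)(d-1\ d)$, $a_d=(a_1,e,\dots,e,a_d)(d\ 1)$. *)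

(* Defs.v *)
From mathcomp Require Import all_boot.
Set Implicit Arguments. Unset Strict Implicit. Unset Printing Implicit Defensive.

(* Alphabet X = {1,...,d} is encoded as 'I_d (letter j+1 <-> ordinal j).
   Vertices of the d-regular rooted tree T are words : seq 'I_d.
   The generator a_{k+1} (k : 'I_d) transposes k and ordS k (= k+1 mod d)
   on the first level, with sections a_{k+1}|_{k} = a_{k+1},
   a_{k+1}|_{ordS k} = a_{(k+1)+1 mod d}, identity elsewhere. *)
Fixpoint gen_act (d : nat) (k : 'I_d) (w : seq 'I_d) : seq 'I_d :=
  match w with
  | [::] => [::]
  | x :: w' =>
      if x == k then ordS k :: gen_act k w'
      else if x == ordS k then k :: gen_act (ordS k) w'
      else x :: w'
  end.

(* Product convention is left-to-right: (g h)(u) = h (g u).  Hence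
   a_1 a_2 ... a_d acts by applying a_1 first, then a_2, ..., a_d last. *)
Definition prod_act (d : nat) (u : seq 'I_d) : seq 'I_d :=
  foldl (fun w k => gen_act k w) u (enum 'I_d).

(* Main.v *)
Require Import Defs.
From mathcomp Require Import all_boot.
From mathcomp Require Import zify.

Set Implicit Arguments. Unset Strict Implicit. Unset Printing Implicit Defensive.

Fixpoint gn (d k : nat) (w : seq nat) : seq nat :=
  match w with
  | [::] => [::]
  | x :: w' =>
      if x == k then (k.+1 %% d) :: gn d k w'
      else if x == k.+1 %% d then k :: gn d (k.+1 %% d) w'
      else x :: w'
  end.

Definition actn d (s : seq nat) (w : seq nat) := foldl (fun w k => gn d k w) w s.

Lemma gen_val d (k : 'I_d) w : map val (gen_act k w) = gn d k (map val w).
Proof.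
elim: w k => [|x w IH] k //=.
rewrite -val_eqE. case: ifP => _ /=; first by rewrite IH.
rewrite -val_eqE /=. case: ifP => _ //=. by rewrite IH.
Qed.

Lemma fold_val d (s : seq 'I_d) u :
  map val (foldl (fun w k => gen_act k w) u s) = actn d (map val s) (map val u).
Proof. elim: s u => [|k s IH] u //=. by rewrite IH gen_val. Qed.

Lemma prod_val d u : map val (@prod_act d u) = actn d (iota 0 d) (map val u).
Proof. by rewrite /prod_act fold_val val_enum_ord. Qed.

Fixpoint tr d (s : seq nat) (x : nat) : nat * seq nat :=
  match s with
  | [::] => (x, [::])
  | k :: s' =>
      if x == k then let p := tr d s' (k.+1 %% d) in (p.1, k :: p.2)
      else if x == k.+1 %% d then let p := tr d s' k in (p.1, k.+1 %% d :: p.2)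
      else tr d s' x
  end.

Lemma actn_cons d s x w :
  actn d s (x :: w) = (tr d s x).1 :: actn d (tr d s x).2 w.
Proof.
elim: s x w => [|k s IH] x w //=.
rewrite /actn /=. case: ifP => _; first by rewrite -/(actn _ _ _) IH.
case: ifP => _; by rewrite -/(actn _ _ _) IH.
Qed.

Lemma actn_cat d s1 s2 w : actn d (s1 ++ s2) w = actn d s2 (actn d s1 w).
Proof. by rewrite /actn foldl_cat. Qed.

Lemma tr_cat d s1 s2 x :
  tr d (s1 ++ s2) x = ((tr d s2 (tr d s1 x).1).1, (tr d s1 x).2 ++ (tr d s2 (tr d s1 x).1).2).
Proof.
elim: s1 x => [|k s IH] x /=; first by case: (tr d s2 x).
case: ifP => _; first by rewrite IH.
case: ifP => _; by rewrite IH.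
Qed.

Lemma tr_skip d s x :
  (forall k, k \in s -> (x != k) && (x != k.+1 %% d)) -> tr d s x = (x, [::]).
Proof.
elim: s => [|k s IH] //= H.
have /andP[/negbTE -> /negbTE ->] := H k (mem_head _ _).
apply: IH => k' hk'. apply: H. by rewrite in_cons hk' orbT.
Qed.

Lemma modS k d : k < d -> k.+1 %% d = if k.+1 == d then 0 else k.+1.
Proof.
move=> h. case: eqP => [->|ne]; first by rewrite modnn.
by rewrite modn_small //; lia.
Qed.

Lemma iota_split m n j : m <= j < m + n ->
  iota m n = iota m (j - m) ++ j :: iota j.+1 (n - (j - m) - 1).
Proof.
move=> /andP[h1 h2].
rewrite {1}(_ : n = (j - m) + (n - (j - m) - 1).+1); last by lia.
rewrite iotaD /= (_ : m + (j - m) = j) //; lia.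
Qed.
Ltac skipt := let k := fresh "k" in move=> k; rewrite ?mem_rev mem_iota => /andP[? ?]; rewrite modS; last lia; case: ifP => /eqP E; apply/andP; split; apply/eqP; lia.

Lemma trG1 d : 3 <= d -> tr d (iota 0 d) 1 = (d.-1, [:: 1; 0]).
Proof.
move=> hd.
rewrite (iota_split (m:=0) (n:=d) (j:=d.-1)); last by lia.
rewrite (_ : d - (d.-1 - 0) - 1 = 0); last by lia.
rewrite (_ : d.-1 - 0 = (d - 2).+1); last by lia.
rewrite /= modn_small; last by lia.
rewrite tr_cat /= (@tr_skip d (iota 1 (d-2)) 0) /=; last by skipt.
rewrite (_ : (0 == d.-1) = false); last by apply/eqP; lia.
rewrite (_ : (d.-1).+1 = d); last by lia.
by rewrite modnn.
Qed.

Lemma trGj d j : 3 <= d -> 2 <= j < d -> tr d (iota 0 d) j = (j.-1, [:: j]).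
Proof.
move=> hd hj.
rewrite (iota_split (m:=0) (n:=d) (j:=j.-1)); last by lia.
rewrite tr_cat (@tr_skip d (iota 0 (j.-1 - 0)) j) /=; last by skipt.
rewrite (_ : (j == j.-1) = false); last by apply/eqP; lia.
rewrite (_ : (j.-1).+1 = j); last by lia.
rewrite (modn_small (m:=j)); last by lia.
rewrite eqxx tr_skip //. skipt.
Qed.

Definition Hs d := [:: 1; 0] ++ rev (iota 2 (d - 2)).

Lemma trH0 d : 3 <= d -> tr d (Hs d) 0 = (1, [:: 0]).
Proof.
move=> hd. rewrite /Hs tr_cat /= (modn_small (m:=2)); last by lia.
rewrite (modn_small (m:=1)) /=; last by lia.
rewrite /= tr_skip //. skipt.
Qed.

Lemma trH1 d : 3 <= d -> tr d (Hs d) 1 = (3 %% d, [:: 1; 2]).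
Proof.
move=> hd. rewrite /Hs tr_cat /= (modn_small (m:=2)); last by lia.
rewrite (modn_small (m:=1)) /=; last by lia.
rewrite (_ : d - 2 = (d - 3).+1); last by lia.
rewrite /= rev_cons -cats1 tr_cat /= (@tr_skip d _ 2) /=; last by skipt.
by [].
Qed.

Lemma trHj d j : 3 <= d -> 3 <= j < d -> tr d (Hs d) j = (j.+1 %% d, [:: j]).
Proof.
move=> hd hj. rewrite /Hs tr_cat /= (modn_small (m:=2)); last by lia.
rewrite (modn_small (m:=1)) /=; last by lia.
rewrite (_ : (j == 1) = false); last by apply/eqP; lia.
rewrite (_ : (j == 2) = false); last by apply/eqP; lia.
rewrite (_ : (j == 0) = false); last by apply/eqP; lia.
rewrite (iota_split (m:=2) (n:=d-2) (j:=j)); last by lia.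
rewrite rev_cat rev_cons -cats1 !tr_cat (@tr_skip d _ j) /=; last by skipt.
rewrite eqxx /=.
rewrite (modS (k:=j)); last by lia.
case: ifP => /eqP E0; rewrite tr_skip //; skipt.
Qed.

Lemma G_step d j w : 3 <= d -> 2 <= j < d ->
  actn d (iota 0 d) (j :: w) = j.-1 :: actn d [:: j] w.
Proof. by move=> hd hj; rewrite actn_cons trGj. Qed.

Lemma G_1 d w : 3 <= d -> actn d (iota 0 d) (1 :: w) = d.-1 :: actn d [:: 1; 0] w.
Proof. by move=> hd; rewrite actn_cons trG1. Qed.

Lemma G_iter d i v : 3 <= d -> i <= d - 2 ->
  iter i (actn d (iota 0 d)) (d.-1 :: v) = (d.-1 - i) :: actn d (rev (iota (d - i) i)) v.
Proof.
move=> hd. elim: i => [|i IH] hi; first by rewrite subn0.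
rewrite iterS IH; last by lia.
rewrite G_step //; last by lia.
rewrite -actn_cat (_ : d - i = (d - i.+1).+1); last by lia.
rewrite [iota _ i.+1]/= rev_cons cats1.
congr (_ :: actn _ (rcons _ _) _); lia.
Qed.

Lemma Gcycle d w : 3 <= d ->
  iter d.-1 (actn d (iota 0 d)) (1 :: w) = 1 :: actn d (Hs d) w.
Proof.
move=> hd. rewrite (_ : d.-1 = (d - 2).+1); last by lia.
rewrite iterSr G_1 // G_iter //.
rewrite -actn_cat /Hs (_ : d - (d - 2) = 2); last by lia.
congr (_ :: _); lia.
Qed.

Lemma Ghead d i w : 3 <= d -> 0 < i < d.-1 ->
  head 0 (iter i (actn d (iota 0 d)) (1 :: w)) != 1.
Proof.
move=> hd hi. case: i hi => [|i] hi //.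
rewrite iterSr G_1 // G_iter /=; last by lia.
  apply/eqP; lia.
by [].
Qed.

Lemma H_j d j w : 3 <= d -> 3 <= j < d ->
  actn d (Hs d) (j :: w) = j.+1 %% d :: actn d [:: j] w.
Proof. by move=> hd hj; rewrite actn_cons trHj. Qed.

Lemma H_iter d i v : 3 <= d -> 3 + i <= d ->
  iter i (actn d (Hs d)) (3 %% d :: v) = (3 + i) %% d :: actn d (iota 3 i) v.
Proof.
move=> hd. elim: i => [|i IH] hi; first by rewrite addn0.
rewrite iterS IH; last by lia.
rewrite (modn_small (m := 3 + i)); last by lia.
rewrite H_j // -actn_cat addnS.
have -> : iota 3 i.+1 = iota 3 i ++ [:: 3 + i] by rewrite -[i.+1]addn1 iotaD.
by [].
Qed.

Lemma H_0 d w : 3 <= d -> actn d (Hs d) (0 :: w) = 1 :: actn d [:: 0] w.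
Proof. by move=> hd; rewrite actn_cons trH0. Qed.

Lemma H_1 d w : 3 <= d -> actn d (Hs d) (1 :: w) = 3 %% d :: actn d [:: 1; 2] w.
Proof. by move=> hd; rewrite actn_cons trH1. Qed.

Lemma Hcycle d w : 3 <= d ->
  iter d.-1 (actn d (Hs d)) (0 :: w) = 0 :: actn d (iota 0 d) w.
Proof.
move=> hd. rewrite (_ : d.-1 = (d - 3) + 2); last by lia.
rewrite iterD !iterS [iter 0 _ _]/= H_0 // H_1 // H_iter //; last by lia.
rewrite (_ : 3 + (d - 3) = d); last by lia.
rewrite modnn -!actn_cat.
have -> : iota 0 d = iota 0 3 ++ iota 3 (d - 3) by rewrite -iotaD; congr iota; lia.
by [].
Qed.

Lemma Hhead d i w : 3 <= d -> 0 < i < d.-1 ->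
  head 0 (iter i (actn d (Hs d)) (0 :: w)) != 0.
Proof.
move=> hd hi. case: i hi => [|[|i]] hi //.
  by rewrite iterS [iter 0 _ _]/= H_0.
rewrite -addn2 iterD !iterS [iter 0 _ _]/= H_0 // H_1 // H_iter /=; last by lia.
rewrite modn_small; last by lia.
  by [].
by [].
Qed.

Fixpoint alt (b : bool) m : seq nat :=
  match m with 0 => [::] | m'.+1 => (if b then 1 else 0) :: alt (~~ b) m' end.

Lemma Gpow d q y : 3 <= d ->
  iter (q * d.-1) (actn d (iota 0 d)) (1 :: y) = 1 :: iter q (actn d (Hs d)) y.
Proof.
move=> hd. elim: q => [|q IH] //. by rewrite mulSn iterD IH Gcycle.
Qed.

Lemma Hpow d q y : 3 <= d ->
  iter (q * d.-1) (actn d (Hs d)) (0 :: y) = 0 :: iter q (actn d (iota 0 d)) y.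
Proof.
move=> hd. elim: q => [|q IH] //. by rewrite mulSn iterD IH Hcycle.
Qed.

Lemma key d m : 3 <= d ->
  (forall k, iter k (actn d (iota 0 d)) (alt true m) = alt true m -> (d.-1) ^ m %| k) /\
  (forall k, iter k (actn d (Hs d)) (alt false m) = alt false m -> (d.-1) ^ m %| k).
Proof.
move=> hd. elim: m => [|m [IHg IHh]]; first by split=> k _; rewrite dvd1n.
have hd1 : 0 < d.-1 by lia.
split=> k Hk.
- move: Hk; rewrite {1 2}(divn_eq k d.-1) /= addnC iterD Gpow //.
  have := ltn_pmod k hd1.
  case: (k %% d.-1) => [|r] hr.
    move=> [] /IHh hq. by rewrite expnSr add0n dvdn_mul.
  move=> E. have := @Ghead d r.+1 (iter (k %/ d.-1) (actn d (Hs d)) (alt false m)) hd.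
  by rewrite E hr /= => /(_ erefl).
- move: Hk; rewrite {1 2}(divn_eq k d.-1) /= addnC iterD Hpow //.
  have := ltn_pmod k hd1.
  case: (k %% d.-1) => [|r] hr.
    move=> [] /IHg hq. by rewrite expnSr add0n dvdn_mul.
  move=> E. have := @Hhead d r.+1 (iter (k %/ d.-1) (actn d (iota 0 d)) (alt true m)) hd.
  by rewrite E hr /= => /(_ erefl).
Qed.

Lemma alt_le b m x : x \in alt b m -> x <= 1.
Proof.
elim: m b => [|m IH] b //=. rewrite in_cons => /orP[/eqP ->|/IH //]. by case: b.
Qed.

Lemma iter_val d n (u : seq 'I_d) :
  map val (iter n (@prod_act d) u) = iter n (actn d (iota 0 d)) (map val u).
Proof. elim: n => [|n IH] //=. by rewrite prod_val IH. Qed.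

Theorem lemma3p3 (d : nat) (hd : 3 <= d) :
  forall n : nat, 0 < n -> exists u : seq 'I_d, iter n (@prod_act d) u != u.
Proof.
move=> n hn.
case: d hd => [|d'] hd //.
exists (map (@inord d') (alt true n)).
have hv : map val (map (@inord d') (alt true n)) = alt true n.
  rewrite -map_comp -{2}(map_id (alt true n)). apply/eq_in_map => x /alt_le hx /=.
  rewrite inordK //; lia.
apply/negP => /eqP E.
have := iter_val n (map (@inord d') (alt true n)).
rewrite E hv => /esym E2.
have := (key n hd).1 n E2.
move=> /(dvdn_leq hn).
have : n < (d'.+1).-1 ^ n by apply: ltn_expl; lia.
lia.
Qed.
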